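(* For $n\ge 2$, let $\mathscr{V}_n=\langle Q,\{a,b\},\delta\rangle$ with $Q=\{0,1,\dots,n-1\}$, where $\delta(i,b)=i+1$ for $0\le i\le n-2$ and $\delta(n-1,b)=0$; $\delta(i,a)=i+1$ for $0\le i\le n-3$, $\delta(n-2,a)=0$ and $\delta(n-1,a)=0$. Then $sc(Syn(\mathscr{V}_n))=2^n-n$.
   Context: For a DFA $\mathscr{A}=\langle Q,\Sigma,\delta\rangle$ (total transition function, extended to words), $Syn(\mathscr{A})$ is the set of words $w\in\Sigma^*$ such that $\delta(q,w)=\delta(q',w)$ for all $q,q'\in Q$. The state complexity $sc(L)$ of a regular language $L$ is the number of states of the minimal (complete) DFA recognizing $L$. *)

(* Defs.v *)
From mathcomp Require Import all_boot.
Set Implicit Arguments. Unset Strict Implicit. Unset Printing Implicit Defensive.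

Inductive letter := La | Lb.

Definition run (Q A : Type) (delta : Q -> A -> Q) (q : Q) (w : seq A) : Q :=
  foldl delta q w.

Definition Syn (Q : finType) (A : Type) (delta : Q -> A -> Q) : pred (seq A) :=
  fun w => [forall q : Q, forall q' : Q, run delta q w == run delta q' w].

Record dfa (A : Type) := DFA {
  dstate : finType;
  dinit : dstate;
  dtrans : dstate -> A -> dstate;
  dfinal : pred dstate }.

Definition accepts (A : Type) (D : dfa A) (w : seq A) : bool :=
  @dfinal A D (run (@dtrans A D) (@dinit A D) w).

Definition recognizes (A : Type) (D : dfa A) (L : pred (seq A)) : Prop :=
  forall w, accepts D w = L w.

Definition state_complexity (A : Type) (L : pred (seq A)) (k : nat) : Prop :=
  (exists D : dfa A, recognizes D L /\ #|dstate D| = k) /\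
  (forall D : dfa A, recognizes D L -> k <= #|dstate D|).

(* The automaton V_n, states Q = {0,...,n-1} represented as 'I_(n.-1.+1)
   (which is 'I_n for n >= 1). *)
Definition Vtrans (n : nat) (q : 'I_n.-1.+1) (c : letter) : 'I_n.-1.+1 :=
  match c with
  | Lb => if q.+1 < n then inord q.+1 else ord0
  | La => if q.+2 < n then inord q.+1 else ord0
  end.

(* Main.v *)
From HB Require Import structures.
Require Import Defs.
From mathcomp Require Import all_boot zify.
Set Implicit Arguments. Unset Strict Implicit. Unset Printing Implicit Defensive.

Lemma vb m (q : 'I_m.+2) : ((@Vtrans m.+2 q Lb) : nat) = q.+1 %% m.+2.
Proof.
have qn := ltn_ord q.
rewrite /Vtrans /=; case: ifP => h.
  by rewrite inordK // modn_small.
have -> : q.+1 = m.+2 by lia.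
by rewrite modnn.
Qed.

Lemma va m (q : 'I_m.+2) : ((@Vtrans m.+2 q La) : nat) = if q.+2 < m.+2 then q.+1 else 0.
Proof.
have qn := ltn_ord q.
rewrite /Vtrans /=; case: ifP => h //.
by rewrite inordK //; lia.
Qed.

Lemma run_cat Q A (d : Q -> A -> Q) q u v : run d q (u ++ v) = run d (run d q u) v.
Proof. by rewrite /run foldl_cat. Qed.

Lemma runB m (q : 'I_m.+2) k : ((run (@Vtrans m.+2) q (nseq k Lb)) : nat) = (q + k) %% m.+2.
Proof.
elim: k => [|k IH].
  by rewrite addn0 modn_small.
rewrite -[k.+1]addn1 nseqD run_cat /= vb IH.
by rewrite -addn1 modnDml addnA.
Qed.

Lemma runA_lt m (q : 'I_m.+2) k : q < m.+1 ->
  ((run (@Vtrans m.+2) q (nseq k La)) : nat) = (q + k) %% m.+1.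
Proof.
move=> qlt; elim: k => [|k IH].
  by rewrite addn0 modn_small.
rewrite -[k.+1]addn1 nseqD run_cat /= va IH.
have h2 := ltn_pmod (q + k) (ltn0Sn m).
rewrite addnA -(modnDml (q+k) 1).
case: ifP => h.
  by rewrite (@modn_small (_ %% _ + 1)) //; lia.
have -> : (q + k) %% m.+1 + 1 = m.+1 by lia.
by rewrite modnn.
Qed.
Lemma card_non1 (T : finType) : #|[pred S : {set T} | #|S| != 1]| = 2 ^ #|T| - #|T|.
Proof.
have P1 : [set S : {set T} | #|S| == 1] = [set [set x] | x : T].
  apply/setP=> S; rewrite inE; apply/cards1P/imsetP => [[x ->]|[x _ ->]]; by exists x.
have cP1 : #|[set S : {set T} | #|S| == 1]| = #|T|.
  by rewrite P1 card_imset //; apply: set1_inj.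
have cT : #|{: {set T}}| = 2 ^ #|T|.
  by rewrite -cardsT -(card_powerset [set: T]) powersetT cardsT.
rewrite -cT -cP1 -(cardsC [set S : {set T} | #|S| == 1]) addKn.
by apply: eq_card => S; rewrite !inE.
Qed.

Definition img (Q : finType) A (d : Q -> A -> Q) (u : seq A) : {set Q} :=
  [set run d q u | q : Q].

Definition norm1 (Q : finType) (X : {set Q}) : {set Q} := if #|X| == 1 then set0 else X.

Lemma norm1P (Q : finType) (X : {set Q}) : #|norm1 X| != 1.
Proof. by rewrite /norm1; case: ifP => [_|->]; rewrite ?cards0. Qed.

Notation ST Q := {S : {set Q} | #|S| != 1}.
Definition stt (Q : finType) (X : {set Q}) : ST Q := exist _ (norm1 X) (norm1P X).

Definition Dup (Q : finType) A (d : Q -> A -> Q) : dfa A :=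
  @DFA A (ST Q) (stt setT) (fun s c => stt ((fun q => d q c) @: val s))
    (fun s => val s == set0).

Lemma img_rcons (Q : finType) A (d : Q -> A -> Q) u c :
  img d (rcons u c) = (fun q => d q c) @: img d u.
Proof.
apply/setP=> x; apply/imsetP/imsetP => [[q _ ->]|[y /imsetP[q _ ->] ->]].
  by exists (run d q u); [apply: imset_f | rewrite /run foldl_rcons].
by exists q => //; rewrite /run foldl_rcons.
Qed.

Lemma norm1_imset (Q : finType) (f : Q -> Q) X : norm1 (f @: norm1 X) = norm1 (f @: X).
Proof.
rewrite /norm1; case: (boolP (#|X| == 1)) => // /cards1P[x ->].
by rewrite imset0 cards0 /= imset_set1 cards1.
Qed.

Lemma Dup_run (Q : finType) A (d : Q -> A -> Q) w :
  val (run (@dtrans A (Dup d)) (@dinit A (Dup d)) w) = norm1 (img d w).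
Proof.
elim/last_ind: w => [|w c IH].
  congr norm1; apply/setP=> x; rewrite !inE; apply/esym/imsetP; by exists x.
by rewrite /run foldl_rcons -/(run _ _ w) /= IH norm1_imset img_rcons.
Qed.

Lemma Syn_img (Q : finType) A (d : Q -> A -> Q) w :
  Syn d w = (#|img d w| <= 1).
Proof.
rewrite /Syn; apply/forallP/card_le1_eqP => [H _ _ /imsetP[q _ ->] /imsetP[q2 _ ->]|H q].
  by apply/eqP; move/forallP: (H q2) => /(_ q).
by apply/forallP=> q'; apply/eqP/H; apply: imset_f.
Qed.

Lemma Dup_rec (Q : finType) A (d : Q -> A -> Q) (q0 : Q) : recognizes (Dup d) (Syn d).
Proof.
move=> w; transitivity (val (run (@dtrans A (Dup d)) (@dinit A (Dup d)) w) == set0) => //.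
rewrite Dup_run Syn_img /norm1.
have ne : run d q0 w \in img d w by apply: imset_f.
case: ifP => [/eqP -> //|h]; first by rewrite eqxx.
apply/idP/idP => [/eqP e|]; first by rewrite e inE in ne.
by rewrite leq_eqVlt h ltnS leqn0 cards_eq0.
Qed.

Lemma Dup_card (Q : finType) A (d : Q -> A -> Q) : #|dstate (Dup d)| = 2 ^ #|Q| - #|Q|.
Proof. by rewrite /= card_sig card_non1. Qed.

Definition V m : 'I_m.+2 -> letter -> 'I_m.+2 := @Vtrans m.+2.
Definition rotq m k (q : 'I_m.+2) := run (@V m) q (nseq k Lb).

Lemma rotv m k q : (@rotq m k q : nat) = (q + k) %% m.+2.
Proof. exact: runB. Qed.

Lemma img_cat (Q : finType) A (d : Q -> A -> Q) u v :
  img d (u ++ v) = [set run d q v | q in img d u].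
Proof.
apply/setP=> x; apply/imsetP/imsetP => [[q _ ->]|[y /imsetP[q _ ->] ->]].
  by exists (run d q u); [apply: imset_f | rewrite run_cat].
by exists q => //; rewrite run_cat.
Qed.

Lemma img_nil (Q : finType) A (d : Q -> A -> Q) : img d [::] = setT.
Proof. by apply/setP=> x; rewrite inE; apply/imsetP; exists x. Qed.

Lemma runA1 m (q : 'I_m.+2) : (run (@V m) q (nseq m.+1 La) : nat) = if q == m.+1 :> nat then m else q.
Proof.
have qn := ltn_ord q.
case: eqP => h.
  rewrite (_ : nseq m.+1 La = [:: La] ++ nseq m La) // run_cat.
  have e : (run (@V m) q [:: La] : nat) = 0 by rewrite /= va h; case: ifP => //; lia.
  have h0 : run (@V m) q [:: La] < m.+1 by rewrite e.
  by rewrite (runA_lt _ h0) e add0n modn_small.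
by rewrite runA_lt; [rewrite modnDr modn_small //; lia | lia].
Qed.

Definition gw m := rcons (nseq m.+1 La) Lb.

Lemma rung m (q : 'I_m.+2) : (run (@V m) q (gw m) : nat) = minn q.+1 m.+1.
Proof.
have qn := ltn_ord q.
rewrite /gw -cats1 run_cat /= vb runA1.
case: eqP => h; first by rewrite modn_small //; lia.
by rewrite modn_small //; lia.
Qed.

Lemma rungk m (q : 'I_m.+2) k : (run (@V m) q (flatten (nseq k (gw m))) : nat) = minn (q + k) m.+1.
Proof.
elim: k q => [|k IH] q /=.
  by rewrite addn0; have := ltn_ord q; lia.
by rewrite run_cat IH rung; lia.
Qed.

Definition vy m (y : 'I_m.+2) := nseq (m.+2 - y) Lb ++ flatten (nseq m (gw m)).

Lemma runvy m (y q : 'I_m.+2) : (run (@V m) q (vy y) : nat) = if q == y then m else m.+1.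
Proof.
rewrite run_cat rungk.
have := runB q (m.+2 - y).
rewrite /V => ->.
have qn := ltn_ord q; have yn := ltn_ord y.
case: eqP => [->|h].
  by rewrite subnKC ?modnn //; lia.
have h2 : (q:nat) <> y by move=> e; apply: h; apply: val_inj.
have : (q + (m.+2 - y)) %% m.+2 != 0.
  case: (leqP y q) => hy.
    have -> : q + (m.+2 - y) = (q - y) + m.+2 by lia.
    rewrite modnDr modn_small; lia.
  rewrite modn_small; lia.
lia.
Qed.

Definition syw m := flatten (nseq m.+1 (gw m)).

Lemma runsyw m (q : 'I_m.+2) : (run (@V m) q (syw m) : nat) = m.+1.
Proof. rewrite rungk; lia. Qed.

Definition synS (Q : finType) A (d : Q -> A -> Q) (S : {set Q}) v :=
  [forall q in S, forall q' in S, run d q v == run d q' v].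

Lemma Syn_cat (Q : finType) A (d : Q -> A -> Q) u v :
  Syn d (u ++ v) = synS d (img d u) v.
Proof.
apply/forallP/forall_inP => [H _ /imsetP[q _ ->]|H q].
  apply/forall_inP => _ /imsetP[q' _ ->]; rewrite -!run_cat; exact: (forallP (H q) q').
apply/forallP => q'; rewrite !run_cat.
exact: (forall_inP (H _ (imset_f _ _)) _ (imset_f _ _)).
Qed.

Lemma rotq_inj m k : injective (@rotq m k).
Proof.
move=> a b /(congr1 val); rewrite /= !rotv => /eqP.
rewrite eqn_modDr !modn_small // => /eqP e; exact: val_inj.
Qed.

Lemma rotqK m (x s : 'I_m.+2) : rotq x (rotq (m.+2 - x) s) = s.
Proof.
apply: val_inj; rewrite /= !rotv modnDml.
have := ltn_ord x; have := ltn_ord s => ??.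
have -> : s + (m.+2 - x) + x = s + m.+2 by lia.
by rewrite modnDr modn_small.
Qed.

Lemma ord_eq m (a b : 'I_m.+2) : (a : nat) = b -> a = b.
Proof. exact: val_inj. Qed.

Lemma vaV m (q : 'I_m.+2) : (@V m q La : nat) = if q.+2 < m.+2 then q.+1 else 0.
Proof. exact: va. Qed.

Lemma reach m k (S : {set 'I_m.+2}) : m.+2 - #|S| <= k -> 2 <= #|S| ->
  exists u, img (@V m) u = S.
Proof.
elim: k S => [|k IH] S hk h2.
  exists [::]; rewrite img_nil; apply/esym/eqP; rewrite eqEcard subsetT cardsT card_ord /=.
  by move: hk; rewrite leqn0 subn_eq0.
have [->|hT] := eqVneq S setT.
  by exists [::]; rewrite img_nil.
have [z zS] : exists z, z \notin S.
  apply/existsP; apply: contraR hT => /existsPn H; apply/eqP/setP => q.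
  by rewrite inE; move: (H q); rewrite negbK.
have [y yS] : exists y, y \in S by apply/card_gt0P; lia.
have exk : exists j, rotq j z \in S.
  exists (m.+2 - z + y); suff -> : rotq (m.+2 - z + y) z = y by [].
  apply: val_inj; rewrite /= rotv.
  have := ltn_ord z; have := ltn_ord y => ??.
  have -> : z + (m.+2 - z + y) = y + m.+2 by lia.
  by rewrite modnDr modn_small.
set kk := ex_minn exk.
have xS : rotq kk z \in S by rewrite /kk; case: ex_minnP.
have kmin : forall j, rotq j z \in S -> kk <= j by rewrite /kk; case: ex_minnP.
have kk0 : 0 < kk.
  case: (posnP kk) => // e; move: xS; rewrite e.
  by rewrite (_ : rotq 0 z = z) ?(negbTE zS) //; apply: val_inj; rewrite /= rotv addn0 modn_small.
set x := rotq kk z.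
have xm : rotq m.+1 x \notin S.
  have -> : rotq m.+1 x = rotq kk.-1 z.
    apply: val_inj; rewrite /= !rotv modnDml.
    have -> : z + kk + m.+1 = (z + kk.-1) + m.+2 by lia.
    by rewrite modnDr.
  by apply/negP => /kmin; lia.
set T := [set q | rotq x q \in S].
have ST : S = rotq x @: T.
  apply/setP => s; apply/idP/imsetP => [sS|[q]]; last by rewrite inE => ? ->.
  by exists (rotq (m.+2 - x) s); rewrite ?inE rotqK.
have cT : #|T| = #|S| by rewrite ST card_imset //; apply: rotq_inj.
have T0 : ord0 \in T.
  rewrite inE (_ : rotq x ord0 = x) //; apply: val_inj; rewrite /= rotv add0n modn_small //.
have Tmax : ord_max \notin T.
  rewrite inE (_ : rotq x ord_max = rotq m.+1 x) //; apply: val_inj; rewrite /= !rotv addnC //.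
set f := fun q => @V m q La.
set S2 := [set q | f q \in T].
have fS2 : f @: S2 = T.
  apply/setP => t; apply/imsetP/idP => [[q]|tT]; first by rewrite inE => ? ->.
  have tn := ltn_ord t.
  case: (posnP t) => t0.
    exists (inord m); last first.
      apply: ord_eq; rewrite /f vaV inordK //; case: ifP => //; lia.
    rewrite inE.
    have -> : f (inord m) = t by apply: ord_eq; rewrite /f vaV inordK //; case: ifP => //; lia.
    done.
  have tm : (t : nat) <> m.+1 by move=> e; move: Tmax; rewrite (_ : ord_max = t) ?tT //; apply: val_inj.
  have ft : f (inord t.-1) = t.
    by apply: ord_eq; rewrite /f vaV inordK; [case: ifP => //; lia | lia].
  by exists (inord t.-1); [rewrite inE ft | rewrite ft].
have fm1 : f (inord m) = ord0 by apply: ord_eq; rewrite /f vaV inordK //; case: ifP => //; lia.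
have fm2 : f ord_max = ord0 by apply: ord_eq; rewrite /f vaV /=; case: ifP => //; lia.
have cS2 : #|S| < #|S2|.
  rewrite -cT -fS2 ltn_neqAle leq_imset_card andbT.
  apply/negP => /imset_injP inj.
  have : (inord m : 'I_m.+2) = ord_max.
    apply: inj; [by rewrite inE fm1 | by rewrite inE fm2 | by rewrite fm1 fm2].
  by move/(congr1 (@nat_of_ord _)); rewrite inordK //=; lia.
have [u hu] : exists u, img (@V m) u = S2.
  apply: IH; move: hk h2 cS2; set a := #|S|; set b := #|S2|; lia.
exists ((u ++ [:: La]) ++ nseq x Lb).
rewrite img_cat img_cat hu ST.
have -> : [set run (@V m) q [:: La] | q in S2] = T by rewrite -fS2.
by [].
Qed.

Definition l2n (c : letter) : nat := match c with La => 0 | Lb => 1 end.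
Definition n2l (k : nat) : letter := if k is 0 then La else Lb.
Lemma l2nK : cancel l2n n2l. Proof. by case. Qed.
HB.instance Definition _ := Countable.copy letter (can_type l2nK).


Lemma img_ne (Q : finType) A (d : Q -> A -> Q) (q : Q) u : 0 < #|img d u|.
Proof. by apply/card_gt0P; exists (run d q u); apply: imset_f. Qed.

Lemma syw_card m : #|img (@V m) (syw m)| == 1.
Proof.
rewrite eqn_leq img_ne ?andbT; last exact: ord0.
apply/card_le1_eqP => _ _ /imsetP[q _ ->] /imsetP[q' _ ->].
by apply: val_inj; rewrite /= !runsyw.
Qed.

Definition good m (S : {set 'I_m.+2}) (u : seq letter) : bool :=
  (#|S| == 1) || (if S == set0 then #|img (@V m) u| == 1 else img (@V m) u == S).

Lemma ex_good m (S : {set 'I_m.+2}) : exists u, good S u.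
Proof.
rewrite /good; case: (boolP (#|S| == 1)) => h1; first by exists [::].
case: (eqVneq S set0) => [_|h0]; first by exists (syw m); rewrite syw_card.
have [u hu] : exists u, img (@V m) u = S.
  apply: (@reach m m.+2) => //; first lia.
  have : 0 < #|S| by rewrite card_gt0.
  by move: h1; case: #|S| => [|[]].
by exists u; rewrite hu eqxx.
Qed.

Lemma synS_le1 (Q : finType) A (d : Q -> A -> Q) (S : {set Q}) :
  #|S| <= 1 -> synS d S [::].
Proof.
move/card_le1_eqP => H; apply/forall_inP => q qS; apply/forall_inP => q' q'S.
by rewrite /= (H q q').
Qed.

Lemma two_el (Q : finType) (T : {set Q}) y : y \in T -> 1 < #|T| -> exists2 y', y' \in T & y' != y.
Proof.
move=> yT h; have : 0 < #|T :\ y| by rewrite (cardsD1 y T) yT in h.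
case/card_gt0P => y'; rewrite !inE => /andP[ne yT']; by exists y'.
Qed.

Lemma sep m (S T : {set 'I_m.+2}) uS uT y : #|S| != 1 -> #|T| != 1 ->
  good S uS -> good T uT -> y \in T -> y \notin S ->
  exists v, synS (@V m) (img (@V m) uS) v != synS (@V m) (img (@V m) uT) v.
Proof.
move=> s1 t1 gS gT yT yS.
have t0 : T != set0 by apply/set0Pn; exists y.
have t2 : 1 < #|T|.
  have : 0 < #|T| by rewrite card_gt0.
  by move: t1; case: #|T| => [|[]].
move: gT; rewrite /good (negbTE t1) (negbTE t0) /= => /eqP ->.
have [y' y'T y'y] := two_el yT t2.
move: gS; rewrite /good (negbTE s1) /=.
case: (eqVneq S set0) => [_ /eqP c1|s0 /eqP ->].
  exists [::]; rewrite synS_le1 ?c1 //.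
  apply/negP => /forall_inP /(_ y yT) /forall_inP /(_ y' y'T) /eqP /= e.
  by rewrite e eqxx in y'y.
exists (vy y).
have -> : synS (@V m) S (vy y).
  apply/forall_inP => q qS; apply/forall_inP => q' q'S; apply/eqP/val_inj.
  rewrite /= !runvy.
  have -> : (q == y) = false by apply/eqP => e; rewrite -e qS in yS.
  by have -> : (q' == y) = false by apply/eqP => e; rewrite -e q'S in yS.
apply/negP => /forall_inP /(_ y yT) /forall_inP /(_ y' y'T) /eqP /(congr1 (@nat_of_ord _)).
rewrite !runvy eqxx (negbTE y'y); lia.
Qed.

Lemma lower m (D : dfa letter) : recognizes D (Syn (@V m)) -> 2 ^ m.+2 - m.+2 <= #|dstate D|.
Proof.
move=> rec.
pose w S := xchoose (@ex_good m S).
have gw : forall S, good S (w S) by move=> S; apply: xchooseP.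
pose f S := run (@dtrans _ D) (@dinit _ D) (w S).
pose A := [set S : {set 'I_m.+2} | #|S| != 1].
have cA : #|A| = 2 ^ m.+2 - m.+2.
  rewrite (_ : 2 ^ m.+2 - m.+2 = 2 ^ #|'I_m.+2| - #|'I_m.+2|); last by rewrite card_ord.
  rewrite -card_non1.
  by apply: eq_card => S; rewrite inE.
have inj : {in A &, injective f}.
  move=> S T; rewrite !inE => s1 t1 e.
  have hv : forall v, synS (@V m) (img (@V m) (w S)) v = synS (@V m) (img (@V m) (w T)) v.
    move=> v; rewrite -!Syn_cat -!rec /accepts !run_cat.
    by rewrite -/(f S) -/(f T) e.
  case: (boolP (T \subset S)) => ts; case: (boolP (S \subset T)) => st.
  - by apply/eqP; rewrite eqEsubset st ts.
  - case/subsetPn: st => y y1 y2.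
    have [v] := sep t1 s1 (gw T) (gw S) y1 y2; by rewrite hv eqxx.
  - case/subsetPn: ts => y y1 y2.
    have [v] := sep s1 t1 (gw S) (gw T) y1 y2; by rewrite hv eqxx.
  - case/subsetPn: ts => y y1 y2.
    have [v] := sep s1 t1 (gw S) (gw T) y1 y2; by rewrite hv eqxx.
by rewrite -cA -(card_in_imset inj) max_card.
Qed.

Theorem proposition4 (n : nat) : 2 <= n ->
  state_complexity (Syn (@Vtrans n)) (2 ^ n - n).
Proof.
case: n => [|[|m]] // _.
split.
  exists (Dup (@V m)); split; first exact: (Dup_rec (@V m) ord0).
  by rewrite Dup_card card_ord.
by move=> D rec; apply: lower.
Qed.
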